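(* Let $M$ be an $L$-structure, $G$ a group definable in $M$, and assume every complete type in $S_{G}(M)$ is definable. Then $(S_{G}(M),G,\mathrm{tp}(1/M))$, with the action $g\cdot\mathrm{tp}(a/M)=\mathrm{tp}(ga/M)$ and distinguished point the type of the identity $1$ of $G$, is the unique universal definable $G$-ambit: for any definable $G$-ambit $(X,G,x_{0})$ there is a unique continuous $G$-equivariant map $h\colon S_{G}(M)\to X$ with $h(\mathrm{tp}(1/M))=x_{0}$, and this map is necessarily surjective.
   Context: $M^{*}$ is a $\kappa$-saturated elementary extension of $M$ with $\kappa>2^{|M|+|L|}$ and $G^{*}$ the interpretation of $G$ in it; $S_{G}(M)$ is the Stone space of complete types over $M$ containing the formula defining $G$ (elements $g\in G$ are identified with the realized types $\mathrm{tp}(g/M)$). A type $p\in S(M)$ is definable if for every $L$-formula $\varphi(x,y)$, $\{b\in M:\varphi(x,b)\in p\}$ is definable in $M$. For a compact Hausdorff space $C$, a map $f\colon G\to C$ is definable if for any disjoint closed $C_{1},C_{2}\subseteq C$ there is a set $Y'\subseteq G$ definable in $M$ (with parameters) with $f^{-1}(C_{1})\subseteq Y'$ and $Y'\cap f^{-1}(C_{2})=\emptyset$. A definable $G$-flow is a compact Hausdorff space $X$ with an action of $G$ by homeomorphisms such that for each $x\in X$ the map $g\mapsto g\cdot x$ from $G$ to $X$ is definable. A definable $G$-ambit $(X,G,x_{0})$ is a definable $G$-flow with a point $x_{0}\in X$ whose orbit $G\cdot x_{0}$ is dense in $X$. *)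

(* Defs.v *)
From HB Require Import structures.
From mathcomp Require Import all_boot.
From mathcomp Require Import boolp classical_sets topology.
Set Implicit Arguments. Unset Strict Implicit. Unset Printing Implicit Defensive.
Local Open Scope classical_set_scope.

Record signature := Signature {
  fsym : Type; farity : fsym -> nat;
  rsym : Type; rarity : rsym -> nat }.

Record structure (L : signature) := Structure {
  carrier :> Type;
  funI : forall f : fsym L, ('I_(farity f) -> carrier) -> carrier;
  relI : forall r : rsym L, ('I_(rarity r) -> carrier) -> Prop }.

Section Syntax.
Variable L : signature.

(* variables are de Bruijn indices *)
Inductive term : Type :=
  | Var of nat
  | App (f : fsym L) of ('I_(farity f) -> term).

Inductive formula : Type :=
  | FEq of term & term
  | FRel (r : rsym L) of ('I_(rarity r) -> term)
  | FNeg of formula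
  | FAnd of formula & formula
  | FEx of formula.

(* a strict upper bound on the (free) variables of a term / formula *)
Fixpoint tbound (t : term) : nat :=
  match t with
  | Var i => i.+1
  | App f a => \max_(i < farity f) tbound (a i)
  end.

Fixpoint fbound (phi : formula) : nat :=
  match phi with
  | FEq t u => maxn (tbound t) (tbound u)
  | FRel r a => \max_(i < rarity r) tbound (a i)
  | FNeg p => fbound p
  | FAnd p q => maxn (fbound p) (fbound q)
  | FEx p => (fbound p).-1
  end.

Variable M : structure L.

Definition scons (a : M) (e : nat -> M) : nat -> M :=
  fun i => if i is j.+1 then e j else a.

Fixpoint teval (e : nat -> M) (t : term) : M :=
  match t with
  | Var i => e i
  | App f a => @funI L M f (fun i => teval e (a i))
  end.

Fixpoint sat (e : nat -> M) (phi : formula) : Prop :=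
  match phi with
  | FEq t u => teval e t = teval e u
  | FRel r a => @relI L M r (fun i => teval e (a i))
  | FNeg p => ~ sat e p
  | FAnd p q => sat e p /\ sat e q
  | FEx p => exists a : M, sat (scons a e) p
  end.

Definition cat_env n (v : 'I_n -> M) (e : nat -> M) : nat -> M :=
  fun i => match (insub i : option 'I_n) with
           | Some o => v o
           | None => e (i - n)
           end.

Definition definable n (D : set ('I_n -> M)) : Prop :=
  exists (phi : formula) (c : nat -> M),
    forall v, D v <-> sat (cat_env v c) phi.

End Syntax.

Section Types.
Variables (L : signature) (M : structure L) (k : nat) (Gset : set ('I_k -> M)).

(* a complete type over M in the variables x = (x_0..x_{k-1}), identified with
   the set {phi(M) : phi(x) in p} of M-definable subsets of M^k it contains *)
Definition is_complete_type (p : set (set ('I_k -> M))) : Prop :=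
  (forall D, p D -> definable D) /\
  [/\ p setT, ~ p set0,
      (forall D E, p D -> p E -> p (D `&` E)),
      (forall D E, p D -> definable E -> D `<=` E -> p E) &
      (forall D, definable D -> p D \/ p (~` D))].

Definition is_SG (p : set (set ('I_k -> M))) : Prop :=
  is_complete_type p /\ p Gset.

Record SG : Type := mkSG { sgval : set (set ('I_k -> M)); sgvalP : is_SG sgval }.

HB.instance Definition _ := gen_eqMixin SG.
HB.instance Definition _ := gen_choiceMixin SG.

(* Stone topology: generated by the basic clopen sets [phi] = {p | phi in p} *)
Definition stone_basic (D : set ('I_k -> M)) : set SG := fun p => sgval p D.

HB.instance Definition _ := isSubBaseTopological.Build SG
  (@definable L M k) stone_basic.

Definition tp (a : 'I_k -> M) : set (set ('I_k -> M)) :=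
  fun D => definable D /\ D a.

(* p is a definable type: for every L-formula phi(x,y) (free variables among
   x_0..x_{k-1}, y_0..y_{n-1}), {b in M^n | phi(x,b) in p} is definable *)
Definition definable_type (p : set (set ('I_k -> M))) : Prop :=
  forall (n : nat) (phi : formula L) (tail : nat -> M),
    fbound phi <= k + n ->
    definable (fun b : 'I_n -> M =>
      p (fun a : 'I_k -> M => sat (cat_env a (cat_env b tail)) phi)).

End Types.

Section Groups.
Variables (L : signature) (M : structure L) (k : nat) (Gset : set ('I_k -> M)).

Definition Gty : Type := {a : 'I_k -> M | Gset a}.

Variables (mul : Gty -> Gty -> Gty) (one : Gty).

Definition is_definable_group : Prop :=
  [/\ definable Gset,
      (exists (phi : formula L) (c : nat -> M), forall a b d : Gty,
          mul a b = d <->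
          sat (cat_env (sval a) (cat_env (sval b) (cat_env (sval d) c))) phi),
      associative mul,
      left_id one mul &
      (forall g, exists h, mul h g = one)].

(* left translation of types: g . tp(a/M) = tp(g a/M) *)
Definition shift_type (g : Gty) (p : set (set ('I_k -> M))) :
    set (set ('I_k -> M)) :=
  fun D => definable D /\
    p (fun a => exists Ha : Gset a, D (sval (mul g (exist _ a Ha)))).

(* the action on S_G(M) (the fallback branch never occurs, cf. the theorem) *)
Definition act_SG (g : Gty) (q : SG Gset) : SG Gset :=
  match pselect (is_SG Gset (shift_type g (sgval q))) with
  | left H => mkSG H
  | right _ => q
  end.

Definition definable_map (X : topologicalType) (f : Gty -> X) : Prop :=
  forall C1 C2 : set X, closed C1 -> closed C2 -> C1 `&` C2 = set0 ->
    exists Y : set ('I_k -> M),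
      [/\ definable Y, Y `<=` Gset,
          (forall g, C1 (f g) -> Y (sval g)) &
          (forall g, Y (sval g) -> ~ C2 (f g))].

Definition definable_flow (X : topologicalType) (act : Gty -> X -> X) : Prop :=
  [/\ hausdorff_space X, compact [set: X] &
      (forall x, act one x = x)] /\
  [/\ (forall g h x, act (mul g h) x = act g (act h x)),
      (forall g, continuous (act g) /\
         exists ginv : X -> X, [/\ continuous ginv, cancel (act g) ginv &
                                   cancel ginv (act g)]) &
      (forall x, definable_map (fun g => act g x))].

Definition definable_ambit (X : topologicalType) (act : Gty -> X -> X) (x0 : X)
  : Prop :=
  definable_flow act /\ closure (range (fun g => act g x0)) = [set: X].

End Groups.

(* Main.v *)
Require Import Defs.
From HB Require Import structures.
From mathcomp Require Import all_boot.
From mathcomp Require Import boolp classical_sets topology.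
From mathcomp Require Import finmap.
From mathcomp Require Import zify.
Local Open Scope classical_set_scope.
Set Implicit Arguments. Unset Strict Implicit. Unset Printing Implicit Defensive.

Section Syn.
Variable L : signature.
Implicit Types (t : term L) (phi : formula L).

Fixpoint trename (s : nat -> nat) t : term L :=
  match t with
  | Var i => Var L (s i)
  | App f a => App (fun i => trename s (a i))
  end.

Definition upr (s : nat -> nat) : nat -> nat :=
  fun i => if i is j.+1 then (s j).+1 else 0.

Fixpoint frename (s : nat -> nat) phi : formula L :=
  match phi with
  | FEq t u => FEq (trename s t) (trename s u)
  | FRel r a => FRel (fun i => trename s (a i))
  | FNeg p => FNeg (frename s p)
  | FAnd p q => FAnd (frename s p) (frename s q)
  | FEx p => FEx (frename (upr s) p)
  end.

Lemma tbound_ren s B t : (forall i, s i < B) -> tbound (trename s t) <= B.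
Proof.
move=> H; elim: t => [i|f a IH] /=; first exact: H.
by apply/bigmax_leqP => i _; apply: IH.
Qed.

Lemma fbound_ren phi : forall s B, (forall i, s i < B) -> fbound (frename s phi) <= B.
Proof.
elim: phi => [t u|r a|p IH|p IHp q IHq|p IH] s B H /=.
- by rewrite geq_max !tbound_ren.
- by apply/bigmax_leqP => i _; apply: tbound_ren.
- exact: IH.
- by rewrite geq_max IHp ?IHq.
- have : fbound (frename (upr s) p) <= B.+1.
    by apply: IH => -[|j] //=; rewrite ltnS.
  lia.
Qed.

Variable M : structure L.

Lemma teval_ren (e : nat -> M) s t : teval e (trename s t) = teval (e \o s) t.
Proof.
elim: t => [i|f a IH] //=.
by congr (funI _); apply: funext => i; apply: IH.
Qed.

Lemma sat_ren phi : forall s (e : nat -> M), sat e (frename s phi) = sat (e \o s) phi.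
Proof.
elim: phi => [t u|r a|p IH|p IHp q IHq|p IH] s e /=.
- by rewrite !teval_ren.
- by congr (relI _); apply: funext => i; rewrite teval_ren.
- by rewrite IH.
- by rewrite IHp IHq.
- have E : forall a, scons a e \o upr s = scons a (e \o s).
    by move=> a; apply: funext => -[|i].
  apply: propext; split=> -[a Ha]; exists a; move: Ha; by rewrite IH E.
Qed.

Lemma teval_loc (e e' : nat -> M) t :
  (forall i, i < tbound t -> e i = e' i) -> teval e t = teval e' t.
Proof.
elim: t => [i|f a IH] /= H; first exact: H.
congr (funI _); apply: funext => i; apply: IH => j Hj; apply: H.
by apply: (leq_trans Hj); exact: leq_bigmax.
Qed.

Lemma sat_loc phi : forall (e e' : nat -> M),
  (forall i, i < fbound phi -> e i = e' i) -> sat e phi = sat e' phi.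
Proof.
elim: phi => [t u|r a|p IH|p IHp q IHq|p IH] e e' /= H.
- rewrite (@teval_loc e e' t) ?(@teval_loc e e' u) // => i Hi; apply: H.
    by apply: (leq_trans Hi); rewrite leq_maxr.
  by apply: (leq_trans Hi); rewrite leq_maxl.
- congr (relI _); apply: funext => i; apply: teval_loc => j Hj; apply: H.
  by apply: (leq_trans Hj); exact: leq_bigmax.
- by rewrite (IH e e').
- rewrite (IHp e e') ?(IHq e e') // => i Hi; apply: H.
    by apply: (leq_trans Hi); rewrite leq_maxr.
  by apply: (leq_trans Hi); rewrite leq_maxl.
- apply: propext; split=> -[a Ha]; exists a; move: Ha; rewrite (IH (scons a e) (scons a e')) //.
    by move=> -[|i] //= Hi; apply: H; lia.
  by move=> -[|i] //= Hi; apply: H; lia.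
Qed.

End Syn.

Definition catn (T : Type) (n : nat) (a b : nat -> T) : nat -> T :=
  fun i => if i < n then a i else b (i - n).

Lemma parity i : {j | i = j.*2} + {j | i = j.*2.+1}.
Proof.
case: (boolP (odd i)) => H; [right|left]; exists i./2.
  by rewrite -[LHS](odd_double_half i) H add1n.
by rewrite -[LHS](odd_double_half i) (negbTE H) add0n.
Qed.

Section DPsec.
Variables (L : signature) (M : structure L) (m0 : M).

Definition merge (e c : nat -> M) : nat -> M :=
  fun i => if odd i then c i./2 else e i./2.

Lemma merge2 e c j : merge e c j.*2 = e j.
Proof. by rewrite /merge odd_double doubleK. Qed.
Lemma merge21 e c j : merge e c j.*2.+1 = c j.
Proof. by rewrite /merge /= odd_double /= uphalf_double. Qed.

Lemma odd2 j : odd j.*2 = false. Proof. exact: odd_double. Qed.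
Lemma odd21 j : odd j.*2.+1 = true. Proof. by rewrite /= odd_double. Qed.
Lemma half2 j : (j.*2)./2 = j. Proof. exact: doubleK. Qed.
Lemma half21 j : (j.*2.+1)./2 = j. Proof. by rewrite /= uphalf_double. Qed.

Ltac mrg := repeat first [rewrite merge2 | rewrite merge21].

Definition DP (P : (nat -> M) -> Prop) :=
  exists (phi : formula L) (c : nat -> M), forall e, P e = sat (merge e c) phi.

Lemma DP_ext P Q : (forall e, P e = Q e) -> DP P -> DP Q.
Proof. by move=> H [phi [c Hc]]; exists phi, c => e; rewrite -H. Qed.

Lemma DP_renv (P : (nat -> M) -> Prop) phi c c' s :
  (forall e, P e = sat (merge e c) phi) ->
  (forall e, merge e c = merge e c' \o s) ->
  forall e, P e = sat (merge e c') (frename s phi).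
Proof. by move=> H1 H2 e; rewrite H1 H2 sat_ren. Qed.

Lemma DP_true : DP (fun _ => True).
Proof.
exists (FEq (Var L 0) (Var L 0)), (fun _ => m0) => e /=.
by apply: propext.
Qed.

Lemma DP_neg P : DP P -> DP (fun e => ~ P e).
Proof. by move=> [phi [c H]]; exists (FNeg phi), c => e /=; rewrite H. Qed.

Lemma DP_and P Q : DP P -> DP Q -> DP (fun e => P e /\ Q e).
Proof.
move=> [phi [c H1]] [psi [d H2]].
pose c'' := merge c d.
pose s1 i := if odd i then (i./2).*2.*2.+1 else i.
pose s2 i := if odd i then ((i./2).*2.+1).*2.+1 else i.
exists (FAnd (frename s1 phi) (frename s2 psi)), c'' => e /=.
rewrite (DP_renv (c' := c'') (s := s1) H1) ?(DP_renv (c' := c'') (s := s2) H2) //.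
  move=> e'; apply: funext => i /=; case: (parity i) => [[j ->]|[j ->]];
  by rewrite /s2 /c'' ?odd2 ?odd21 ?half2 ?half21; mrg.
move=> e'; apply: funext => i /=; case: (parity i) => [[j ->]|[j ->]];
by rewrite /s1 /c'' ?odd2 ?odd21 ?half2 ?half21; mrg.
Qed.

Lemma DP_ex P : DP P -> DP (fun e => exists a, P (scons a e)).
Proof.
move=> [phi [c H]].
pose s i := if odd i then (i./2).*2.+2 else (if i./2 is j.+1 then j.*2.+1 else 0).
exists (FEx (frename s phi)), c => e /=.
have E : forall a, merge (scons a e) c = scons a (merge e c) \o s.
  move=> a; apply: funext => i /=; case: (parity i) => [[j ->]|[j ->]];
  rewrite /s ?odd2 ?odd21 ?half2 ?half21 ?merge2 ?merge21 //.
  by case: j => [|j] //=; mrg.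
  by rewrite -[_.+2]/((j.*2.+1).+1) /=; mrg.
apply: propext; split=> -[a Ha]; exists a; move: Ha; by rewrite H E sat_ren.
Qed.

Lemma DP_sub P (s : nat -> option nat) (v : nat -> M) :
  DP P -> DP (fun e => P (fun i => if s i is Some j then e j else v i)).
Proof.
move=> [phi [c H]].
pose c' := merge v c.
pose sg i := if odd i then ((i./2).*2.+1).*2.+1
             else (if s i./2 is Some j then j.*2 else (i./2).*2.*2.+1).
exists (frename sg phi), c' => e; rewrite H sat_ren; congr sat.
apply: funext => i /=; case: (parity i) => [[j ->]|[j ->]];
rewrite /sg /c' ?odd2 ?odd21 ?half2 ?half21; mrg => //.
by case: (s j) => [j'|]; mrg.
Qed.

Lemma DP_catn n (c : nat -> M) phi : DP (fun e => sat (catn n e c) phi).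
Proof.
pose s i := if i < n then i.*2 else (i - n).*2.+1.
exists (frename s phi), c => e; rewrite sat_ren; congr sat.
by apply: funext => i; rewrite /catn /s /=; case: ifP; rewrite ?merge2 ?merge21.
Qed.

Definition tupl n (e : nat -> M) : 'I_n -> M := fun o => e o.
Arguments tupl : clear implicits.

Lemma cat_env_ord n (v : 'I_n -> M) e (o : 'I_n) : cat_env v e o = v o.
Proof. by rewrite /cat_env valK. Qed.

Lemma cat_env_lt n (v : 'I_n -> M) e i (H : i < n) : cat_env v e i = v (Ordinal H).
Proof. by rewrite -[i]/(nat_of_ord (Ordinal H)) cat_env_ord. Qed.

Lemma cat_env_ge n (v : 'I_n -> M) e i : n <= i -> cat_env v e i = e (i - n).
Proof. by move=> H; rewrite /cat_env insubN // -leqNgt. Qed.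

Lemma tupl_cat_env n (v : 'I_n -> M) e : tupl n (cat_env v e) = v.
Proof. by apply: funext => o; rewrite /tupl cat_env_ord. Qed.

Lemma cat_env_tupl n (e c : nat -> M) : cat_env (tupl n e) c = catn n e c.
Proof.
apply: funext => i; rewrite /catn; case: ltnP => H.
  by rewrite cat_env_lt.
by rewrite cat_env_ge.
Qed.

Lemma catn_cat_env n (v : 'I_n -> M) e1 e : catn n (cat_env v e1) e = cat_env v e.
Proof.
apply: funext => i; rewrite /catn; case: ltnP => H.
  by rewrite !cat_env_lt.
by rewrite cat_env_ge.
Qed.

Lemma definable_DP n (D : set ('I_n -> M)) : definable D -> DP (fun e => D (tupl n e)).
Proof.
move=> [phi [c H]]; apply: DP_ext (DP_catn n c phi) => e.
by rewrite -cat_env_tupl; apply: propext; split => /H.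
Qed.

Lemma DP_definable n P (e0 : nat -> M) : DP P ->
  definable (fun v : 'I_n -> M => P (cat_env v e0)).
Proof.
move=> HP.
have : DP (fun e => P (catn n e e0)).
  apply: DP_ext (DP_sub (fun i => if i < n then Some i else None)
                        (fun i => e0 (i - n)) HP) => e.
  by congr P; apply: funext => i; rewrite /catn; case: ifP.
move=> [phi [c H]].
pose s i := if odd i then n + i./2 else i./2.
exists (frename s phi), c => v.
have -> : P (cat_env v e0) = P (catn n (cat_env v c) e0).
  by rewrite catn_cat_env.
rewrite H sat_ren; suff -> : merge (cat_env v c) c = cat_env v c \o s by [].
apply: funext => i /=; case: (parity i) => [[j ->]|[j ->]];
rewrite /s ?odd2 ?odd21 ?half2 ?half21; mrg => //.
by rewrite cat_env_ge ?leq_addr // addKn.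
Qed.

Lemma definable_iff n (D : set ('I_n -> M)) :
  definable D <-> DP (fun e => D (tupl n e)).
Proof.
split; first exact: definable_DP.
move=> /(DP_definable n (fun _ => m0)); congr definable.
by apply: funext => v; rewrite tupl_cat_env.
Qed.

Lemma catn0 (z e : nat -> M) : catn 0 z e = e.
Proof. by apply: funext => i; rewrite /catn subn0. Qed.

Lemma DP_exn n P : DP P -> DP (fun e => exists z : nat -> M, P (catn n z e)).
Proof.
elim: n P => [|n IH] P HP.
  apply: DP_ext HP => e; apply: propext; split.
    by move=> H; exists (fun _ => m0); rewrite catn0.
  by move=> [z]; rewrite catn0.
apply: DP_ext (DP_ex (IH P HP)) => e; apply: propext; split.
  move=> [a [z Hz]]; exists (fun i => if i == n then a else z i).
  congr P: Hz; apply: funext => i; rewrite /catn /=.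
  case: (ltngtP i n) => H.
  - by have -> : (i < n.+1) = true by lia.
  - have -> : (i < n.+1) = false by lia.
    by have -> : i - n = (i - n.+1).+1 by lia.
  - by subst i; rewrite ltnSn subnn.
move=> [z Hz]; exists (z n), z; congr P: Hz; apply: funext => i; rewrite /catn.
case: (ltngtP i n) => H.
- by have -> : (i < n.+1) = true by lia.
- have -> : (i < n.+1) = false by lia.
  by have -> : i - n = (i - n.+1).+1 by lia.
- by subst i; rewrite ltnSn subnn.
Qed.

End DPsec.
Arguments tupl {L M} n e.

Ltac senv := rewrite /catn /=; repeat (case: ifP => ?); try (by []);
  try (by exfalso; lia); try (by f_equal; lia).

Lemma catn_lt (T : Type) n (a b : nat -> T) i : i < n -> catn n a b i = a i.
Proof. by rewrite /catn => ->. Qed.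

Section Grp.
Variables (L : signature) (M : structure L) (m0 : M) (k : nat)
  (Gset : set ('I_k -> M)).
Variables (mul : Gty Gset -> Gty Gset -> Gty Gset) (one : Gty Gset).

Definition ev (v : 'I_k -> M) : nat -> M := cat_env v (fun _ => m0).

Lemma tupl_ev v : tupl k (ev v) = v.
Proof. exact: tupl_cat_env. Qed.

Lemma cat_env_ev v e : cat_env v e = catn k (ev v) e.
Proof. by rewrite catn_cat_env. Qed.

Lemma ev_tupl (z : nat -> M) : ev (tupl k z) = catn k z (fun _ => m0).
Proof. by rewrite /ev cat_env_tupl. Qed.

Lemma tupl_catn (z e : nat -> M) : tupl k (catn k z e) = tupl k z.
Proof. by apply: funext => o; rewrite /tupl /catn ltn_ord. Qed.

Lemma def_setT : definable (@setT ('I_k -> M)).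
Proof. by apply/(definable_iff m0); apply: DP_ext (DP_true m0). Qed.

Lemma def_setI (D E : set ('I_k -> M)) : definable D -> definable E -> definable (D `&` E).
Proof.
move=> /(definable_iff m0) HD /(definable_iff m0) HE; apply/(definable_iff m0).
exact: DP_ext (DP_and HD HE).
Qed.

Lemma def_setC (D : set ('I_k -> M)) : definable D -> definable (~` D).
Proof.
move=> /(definable_iff m0) HD; apply/(definable_iff m0).
exact: DP_ext (DP_neg HD).
Qed.

Lemma def_set0 : definable (@set0 ('I_k -> M)).
Proof. by rewrite -setCT; apply: def_setC; exact: def_setT. Qed.

Lemma def_setU (D E : set ('I_k -> M)) : definable D -> definable E -> definable (D `|` E).
Proof.
move=> HD HE; rewrite -[_ `|` _]setCK setCU; apply: def_setC.
by apply: def_setI; apply: def_setC.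
Qed.

Section CT.
Variable p : set (set ('I_k -> M)).
Hypothesis Hp : is_complete_type p.

Lemma ct_def D : p D -> definable D. Proof. by case: Hp => H _; apply: H. Qed.
Lemma ct_T : p setT. Proof. by case: Hp => _ [H _ _ _ _]. Qed.
Lemma ct_0 : ~ p set0. Proof. by case: Hp => _ [_ H _ _ _]. Qed.
Lemma ct_I D E : p D -> p E -> p (D `&` E). Proof. by case: Hp => _ [_ _ H _ _]; apply: H. Qed.
Lemma ct_up D E : p D -> definable E -> D `<=` E -> p E. Proof. by case: Hp => _ [_ _ _ H _]; apply: H. Qed.
Lemma ct_dich D : definable D -> p D \/ p (~` D). Proof. by case: Hp => _ [_ _ _ _ H]; apply: H. Qed.

Lemma ct_neg D : p D -> ~ p (~` D).
Proof. by move=> H1 H2; apply: ct_0; rewrite -(setICr D); apply: ct_I. Qed.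

Lemma ct_notC D : definable D -> ~ p D -> p (~` D).
Proof. by move=> /ct_dich [] . Qed.

Lemma ct_ne D : p D -> exists a, D a.
Proof.
move=> H; apply: contrapT => N; apply: ct_0.
suff <- : D = set0 by [].
by apply: funext => a; apply: propext; split=> // Da; apply: N; exists a.
Qed.
End CT.

Lemma SG_eq (p q : SG Gset) : sgval p = sgval q -> p = q.
Proof.
case: p => p Hp; case: q => q Hq /= E; subst q.
by congr mkSG; apply: Prop_irrelevance.
Qed.

Lemma tp_ct (a : 'I_k -> M) : is_complete_type (tp a).
Proof.
split; first by move=> D [].
split.
- by split=> //; exact: def_setT.
- by case.
- by move=> D E [HD Da] [HE Ea]; split; [exact: def_setI|].
- by move=> D E [HD Da] HE DE; split => //; exact: DE.
- move=> D HD; case: (pselect (D a)) => H; [left|right]; split => //.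
  exact: def_setC.
Qed.

Hypothesis HGset : definable Gset.

Lemma tp_SG a : Gset a -> is_SG Gset (tp a).
Proof. by move=> Ga; split; [exact: tp_ct|]. Qed.

Definition transl (g : Gty Gset) (D : set ('I_k -> M)) : set ('I_k -> M) :=
  fun a => exists Ha : Gset a, D (sval (mul g (exist _ a Ha))).

Variables (phiM : formula L) (cM : nat -> M).
Hypothesis HM : forall a b d : Gty Gset, mul a b = d <->
  sat (cat_env (sval a) (cat_env (sval b) (cat_env (sval d) cM))) phiM.

Definition Rm (e : nat -> M) := sat (catn (k + (k + k)) e cM) phiM.

Lemma DP_Rm : DP Rm.
Proof. exact: DP_catn. Qed.

Lemma Rm_mul (a b d : Gty Gset) e :
  (forall i, i < k + (k + k) ->
     e i = catn k (ev (sval a)) (catn k (ev (sval b)) (ev (sval d))) i) ->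
  Rm e <-> mul a b = d.
Proof.
move=> H; rewrite HM /Rm.
suff -> : catn (k + (k + k)) e cM =
  cat_env (sval a) (cat_env (sval b) (cat_env (sval d) cM)) by [].
rewrite !cat_env_ev; apply: funext => i.
case: (ltnP i (k + (k + k))) => Hi.
  rewrite catn_lt // H //; senv.
senv.
Qed.

Lemma Rm_to_mul (a b d : Gty Gset) e : Rm e ->
  (forall i, i < k + (k + k) ->
     e i = catn k (ev (sval a)) (catn k (ev (sval b)) (ev (sval d))) i) ->
  mul a b = d.
Proof. by move=> R H; apply/(Rm_mul H). Qed.

Lemma mul_to_Rm (a b d : Gty Gset) e : mul a b = d ->
  (forall i, i < k + (k + k) ->
     e i = catn k (ev (sval a)) (catn k (ev (sval b)) (ev (sval d))) i) ->
  Rm e.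
Proof. by move=> R H; apply/(Rm_mul H). Qed.

Lemma transl_def g D : definable D -> definable (transl g D).
Proof.
move=> HD.
pose s i := if i < k then None else if i < k + k then Some i
  else if i < k + (k + k) then Some (i - (k + k)) else None.
pose gv := ev (sval g).
pose Q e' := Gset (tupl k e') /\ D (tupl k e') /\
  Rm (fun i => if s i is Some j then e' j else gv i).
have DQ : DP Q.
  apply: DP_and; first exact: definable_DP.
  apply: DP_and; first exact: definable_DP.
  exact: DP_sub DP_Rm.
pose P e := Gset (tupl k e) /\ exists z, Q (catn k z e).
have DPP : DP P by apply: DP_and; [exact: definable_DP| exact: (DP_exn m0)].
have := DP_definable k (fun _ => m0) DPP; congr definable.
apply: funext => x; rewrite /P /Q -/(ev x) tupl_ev.
apply: propext; split.
  move=> [Gx [z [Gz [Dz Rz]]]]; exists Gx; rewrite tupl_catn in Gz Dz.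
  have : mul g (exist _ x Gx) = exist _ (tupl k z) Gz.
    apply: (Rm_to_mul Rz) => i Hi /=; rewrite ev_tupl /s /gv; senv.
  by move=> ->.
move=> [Gx Dm]; split => //; exists (ev (sval (mul g (exist _ x Gx)))).
rewrite tupl_catn tupl_ev; split; first exact: (svalP (mul g (exist _ x Gx))).
split => //.
apply: (@mul_to_Rm g (exist _ x Gx) (mul g (exist _ x Gx))) => // i Hi /=.
rewrite /s /gv; senv.
Qed.

End Grp.

Lemma sig_eta (T : Type) (P : T -> Prop) (x : {a | P a}) (H : P (sval x)) :
  exist _ (sval x) H = x.
Proof. by case: x H => a Ha H /=; congr exist; apply: Prop_irrelevance. Qed.

Section Act.
Variables (L : signature) (M : structure L) (m0 : M) (k : nat)
  (Gset : set ('I_k -> M)).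
Variables (mul : Gty Gset -> Gty Gset -> Gty Gset) (one : Gty Gset).
Hypothesis HGset : definable Gset.
Variables (phiM : formula L) (cM : nat -> M).
Hypothesis HM : forall a b d : Gty Gset, mul a b = d <->
  sat (cat_env (sval a) (cat_env (sval b) (cat_env (sval d) cM))) phiM.
Hypothesis Hassoc : associative mul.
Hypothesis Hlid : left_id one mul.
Hypothesis Hinv : forall g, exists h, mul h g = one.

Local Notation transl := (transl mul).
Local Notation tdef := (transl_def m0 HGset HM).

Lemma mulV g h : mul h g = one -> mul g h = one.
Proof.
move=> Hhg; have [h' Hh'] := Hinv h.
by rewrite -[mul g h]Hlid -Hh' -Hassoc (Hassoc h) Hhg Hlid.
Qed.

Lemma mul1 g : mul g one = g.
Proof.
have [h Hh] := Hinv g.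
by rewrite -Hh Hassoc (mulV Hh) Hlid.
Qed.

Lemma transl_I g D E : transl g (D `&` E) = transl g D `&` transl g E.
Proof.
apply: funext => a; apply: propext; split.
  by move=> [Ha [HD HE]]; split; exists Ha.
move=> [[Ha HD] [Ha' HE]]; exists Ha; split => //.
by rewrite (Prop_irrelevance Ha Ha').
Qed.

Lemma transl_sub g D E : D `<=` E -> transl g D `<=` transl g E.
Proof. by move=> H a [Ha HD]; exists Ha; apply: H. Qed.

Lemma transl_G g : transl g Gset = Gset.
Proof.
apply: funext => a; apply: propext; split; first by case.
by move=> Ha; exists Ha; exact: svalP.
Qed.

Lemma transl_T g : transl g setT = Gset.
Proof.
by apply: funext => a; apply: propext; split; [case|move=> Ha; exists Ha].
Qed.

Lemma transl_0 g : transl g set0 = set0.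
Proof. by apply: funext => a; apply: propext; split => // -[]. Qed.

Lemma transl_C g D : transl g (~` D) = Gset `&` ~` transl g D.
Proof.
apply: funext => a; apply: propext; split.
  move=> [Ha HD]; split => // -[Ha' HD']; apply: HD.
  by rewrite (Prop_irrelevance Ha Ha').
by move=> [Ha HN]; exists Ha => HD; apply: HN; exists Ha.
Qed.

Lemma transl_one D : transl one D = Gset `&` D.
Proof.
apply: funext => a; apply: propext; split.
  by move=> [Ha]; rewrite Hlid.
by move=> [Ha HD]; exists Ha; rewrite Hlid.
Qed.

Lemma transl_mul g h D : transl (mul g h) D = transl h (transl g D).
Proof.
apply: funext => a; apply: propext; split.
  move=> [Ha HD]; exists Ha; exists (svalP (mul h (exist _ a Ha))).
  by rewrite sig_eta Hassoc.
move=> [Ha [H' HD]]; exists Ha; move: HD; by rewrite sig_eta Hassoc.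
Qed.

Lemma shiftE g p D : shift_type mul g p D = (definable D /\ p (transl g D)).
Proof. by []. Qed.

Lemma shift_SG g p : is_SG Gset p -> is_SG Gset (shift_type mul g p).
Proof.
move=> [Hp pG]; split; last by rewrite shiftE transl_G.
split; first by move=> D [].
split.
- by rewrite shiftE transl_T; split; [exact: def_setT|].
- by rewrite shiftE transl_0 => -[_]; exact: ct_0.
- move=> D E; rewrite !shiftE => -[HD pD] [HE pE]; split; first exact: def_setI.
  by rewrite transl_I; exact: ct_I.
- move=> D E; rewrite !shiftE => -[HD pD] HE DE; split => //.
  apply: (ct_up Hp pD); first exact: tdef.
  exact: transl_sub.
- move=> D HD; rewrite !shiftE.
  case: (ct_dich Hp (tdef g HD)) => H; [left|right] => //.
  split; first exact: def_setC.
  by rewrite transl_C; exact: ct_I.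
Qed.

Lemma act_SGE g q : sgval (act_SG mul g q) = shift_type mul g (sgval q).
Proof.
rewrite /act_SG; case: pselect => // N; exfalso; apply: N.
apply: shift_SG; exact: sgvalP.
Qed.



Lemma act_one q : act_SG mul one q = q.
Proof.
apply: SG_eq; rewrite act_SGE; apply: funext => D; apply: propext.
have [Hq qG] := sgvalP q.
rewrite shiftE; split.
  move=> [HD H]; rewrite transl_one in H; apply: (ct_up Hq H) => //.
  all: try by move=> ? [].
move=> H; split; first exact: ct_def H.
by rewrite transl_one; apply: ct_I.
Qed.

Lemma act_mul g h q : act_SG mul (mul g h) q = act_SG mul g (act_SG mul h q).
Proof.
apply: SG_eq; rewrite !act_SGE; apply: funext => D; apply: propext.
rewrite !shiftE transl_mul; split.
  by move=> [HD H]; split => //; split => //; exact: tdef.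
by move=> [HD [_ H]].
Qed.

Lemma act_tp g a (Ha : Gset a) (H1 : is_SG Gset (tp a))
  (H2 : is_SG Gset (tp (sval (mul g (exist _ a Ha))))) :
  act_SG mul g (mkSG H1) = mkSG H2.
Proof.
apply: SG_eq; rewrite act_SGE /=; apply: funext => D; apply: propext.
rewrite shiftE /tp; split.
  move=> [HD [_ [Ha' HD']]]; split => //.
  by rewrite (Prop_irrelevance Ha Ha').
move=> [HD HD']; split => //; split; first exact: tdef.
by exists Ha.
Qed.

End Act.

Section Top.
Variables (L : signature) (M : structure L) (m0 : M) (k : nat)
  (Gset : set ('I_k -> M)).

Local Notation SGt := (SG Gset).
Local Notation stone := (@stone_basic L M k Gset).

Lemma ctq (q : SGt) : is_complete_type (sgval q).
Proof. by case: (sgvalP q). Qed.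

Lemma stoneI D E : definable D -> definable E ->
  stone (D `&` E) = stone D `&` stone E.
Proof.
move=> HD HE; apply: funext => q; apply: propext; rewrite /stone; split.
  by move=> H; split; apply: (ct_up (ctq q) H) => // x [].
by move=> [H1 H2]; apply: ct_I => //; exact: ctq.
Qed.

Lemma stoneT : stone setT = setT.
Proof. by apply: funext => q; apply: propext; split => // _; apply: ct_T (ctq q). Qed.

Lemma stoneC D : definable D -> stone (~` D) = ~` stone D.
Proof.
move=> HD; apply: funext => q; apply: propext; rewrite /stone; split.
  by move=> H1 H2; apply: (ct_neg (ctq q) H2 H1).
by move=> H; exact: (ct_notC (ctq q) HD H).
Qed.

Lemma stone0 : stone set0 = set0.
Proof. by apply: funext => q; apply: propext; split => // H; apply: ct_0 (ctq q) H. Qed.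

Lemma stoneG : stone Gset = setT.
Proof. by apply: funext => q; apply: propext; split => // _; case: (sgvalP q). Qed.

Lemma bigI_stone (s : seq (set ('I_k -> M))) : (forall i, i \in s -> definable i) ->
  exists E, definable E /\ \big[setI/setT]_(i <- s) stone i = stone E.
Proof.
elim: s => [|a s IH] H.
  by exists setT; split; [exact: def_setT m0 k|rewrite big_nil stoneT].
have [|E [HE EE]] := IH; first by move=> i Hi; apply: H; rewrite inE Hi orbT.
have Ha : definable a by apply: H; rewrite inE eqxx.
exists (a `&` E); split; first exact: (def_setI m0 Ha HE).
by rewrite big_cons EE stoneI.
Qed.

Lemma finI_stone A : finI_from (@definable L M k) stone A ->
  exists E, definable E /\ A = stone E.
Proof.
move=> [D' HD' <-]; rewrite bigcap_fset.
apply: bigI_stone => i Hi; have := HD' i Hi; by rewrite in_setE.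
Qed.

Lemma nbhs_stone (q : SGt) N : nbhs q N ->
  exists E, [/\ definable E, sgval q E & stone E `<=` N].
Proof.
rewrite nbhsE => -[B [[D' HD' EB] Bq] BN].
rewrite -EB in Bq; case: Bq => A D'A Aq.
have [E [HE AE]] := finI_stone (HD' _ D'A).
exists E; split => //; first by rewrite AE in Aq.
move=> r Er; apply: BN; rewrite -EB; exists A => //; by rewrite AE.
Qed.

Lemma open_stone D : definable D -> open (stone D).
Proof.
move=> HD; exists [set stone D]; first by move=> A ->; exact: finI_from1.
by rewrite bigcup_set1.
Qed.

Lemma stone_nbhs (q : SGt) D : definable D -> sgval q D -> nbhs q (stone D).
Proof.
move=> HD Hq; rewrite nbhsE; exists (stone D) => //; split => //.
exact: open_stone.
Qed.

Lemma SG_hausdorff : hausdorff_space SGt.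
Proof.
move=> p q Hc; apply: contrapT => Npq.
have : sgval p <> sgval q by move=> E; apply: Npq; apply: SG_eq.
move=> Nv; have [D ND] : exists D, sgval p D <> sgval q D.
  apply: contrapT => H; apply: Nv; apply: funext => D.
  by apply: contrapT => H'; apply: H; exists D.
have [pD|pD] := pselect (sgval p D).
  have qD : ~ sgval q D by move=> qD; apply: ND; apply: propext.
  have HD := ct_def (ctq p) pD.
  have [r [r1 r2]] := Hc _ _ (stone_nbhs HD pD) (stone_nbhs (def_setC m0 HD) (ct_notC (ctq q) HD qD)).
  exact: (ct_neg (ctq r) r1 r2).
have qD : sgval q D by apply: contrapT => qD; apply: ND; apply: propext.
have HD := ct_def (ctq q) qD.
have [r [r1 r2]] := Hc _ _ (stone_nbhs (def_setC m0 HD) (ct_notC (ctq p) HD pD)) (stone_nbhs HD qD).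
exact: (ct_neg (ctq r) r2 r1).
Qed.

Lemma SG_compact : definable Gset -> compact [set: SGt].
Proof.
move=> HGset; rewrite compact_ultra => F UF _.
pose pF := fun D => definable D /\ F (stone D).
have PF : ProperFilter F by apply: ultra_proper.
have HpF : is_SG Gset pF.
  split; last by split => //; rewrite /pF stoneG; exact: filterT.
  split; first by move=> D [].
  split.
  - by split; [exact: def_setT m0 k|rewrite stoneT; exact: filterT].
  - by move=> [_]; rewrite stone0; exact: filter_not_empty.
  - move=> D E [HD FD] [HE FE]; split; first exact: (def_setI m0 HD HE).
    by rewrite stoneI //; exact: filterI.
  - move=> D E [HD FD] HE DE; split => //; apply: filterS FD.
    by move=> r rD; apply: (ct_up (ctq r) rD).
  - move=> D HD; case: (in_ultra_setVsetC (stone D) UF) => H; [left|right].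
      by [].
    by split; [exact: (def_setC m0 HD)|rewrite stoneC].
exists (mkSG HpF); split => //.
move=> N /nbhs_stone [E [HE [_ FE] EN]].
exact: filterS EN FE.
Qed.

Lemma stone_continuous (f : SGt -> SGt) :
  (forall D, definable D -> exists D', definable D' /\ f @^-1` stone D = stone D') ->
  continuous f.
Proof.
move=> H x N /nbhs_stone [E [HE fE EN]].
have [D' [HD' ED']] := H E HE.
have xD' : sgval x D' by have : (f @^-1` stone E) x by []; rewrite ED'.
suff : nbhs x (f @^-1` N) by [].
apply: filterS (stone_nbhs HD' xD').
by move=> y; rewrite -ED' => /EN.
Qed.

End Top.

Section Univ.
Variables (L : signature) (M : structure L) (m0 : M) (k : nat)
  (Gset : set ('I_k -> M)).
Variables (mul : Gty Gset -> Gty Gset -> Gty Gset) (one : Gty Gset).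
Hypothesis HGset : definable Gset.
Variables (phiM : formula L) (cM : nat -> M).
Hypothesis HM : forall a b d : Gty Gset, mul a b = d <->
  sat (cat_env (sval a) (cat_env (sval b) (cat_env (sval d) cM))) phiM.
Hypothesis Hassoc : associative mul.
Hypothesis Hlid : left_id one mul.
Hypothesis Hinv : forall g, exists h, mul h g = one.

Variables (X : topologicalType) (act : Gty Gset -> X -> X) (x0 : X).
Hypothesis Hamb : definable_ambit mul one act x0.

Local Notation SGt := (SG Gset).
Local Notation stone := (@stone_basic L M k Gset).

Lemma hX : hausdorff_space X. Proof. by case: Hamb => -[[]]. Qed.
Lemma cX : compact [set: X]. Proof. by case: Hamb => -[[]]. Qed.
Lemma act1 x : act one x = x. Proof. by case: Hamb => -[[]]. Qed.
Lemma actM g h x : act (mul g h) x = act g (act h x). Proof. by case: Hamb => -[_ []]. Qed.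
Lemma actc g : continuous (act g). Proof. by case: Hamb => -[_ [_ H _]]; case: (H g). Qed.
Lemma actdef x : definable_map (fun g => act g x). Proof. by case: Hamb => -[_ [_ _ H]]. Qed.
Lemma dense : closure (range (fun g => act g x0)) = [set: X]. Proof. by case: Hamb. Qed.

Definition f (g : Gty Gset) := act g x0.
Definition imgD (D : set ('I_k -> M)) : set X := [set f g | g in [set g | D (sval g)]].

Definition isH (q : SGt) (y : X) := forall D, sgval q D -> closure (imgD D) y.

Lemma reg (x : X) U : nbhs x U -> exists2 V, nbhs x V & closure V `<=` U.
Proof.
move=> HU; have Hr := @compact_regular X x setT hX cX (@filterT X (nbhs x) _).
by have [V HV VU] := Hr _ U HU; exists V.
Qed.

Lemma ctq' (q : SGt) : is_complete_type (sgval q).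
Proof. by case: (sgvalP q). Qed.

Lemma q_ne (q : SGt) D : sgval q D -> exists g : Gty Gset, D (sval g).
Proof.
move=> qD; have [Hq qG] := sgvalP q.
have [a [Ga Da]] := ct_ne Hq (ct_I Hq qG qD).
by exists (exist _ a Ga).
Qed.

Lemma isH_ex q : exists y, isH q y.
Proof.
pose F := filter_from (sgval q) imgD.
have FF : Filter F.
  apply: filter_from_filter; first by exists setT; exact: (ct_T (ctq' q)).
  move=> D E qD qE; exists (D `&` E); first exact: (ct_I (ctq' q) qD qE).
  by move=> _ [g [Dg Eg] <-]; split; exists g.
have PF : ProperFilter F.
  apply: filter_from_proper => D qD.
  by have [g Dg] := q_ne qD; exists (f g), g.
have [y [_ Hy]] := cX PF (@filterT _ F _).
exists y => D qD; rewrite clusterE in Hy; apply: Hy.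
by exists D.
Qed.

Lemma charH q y : isH q y -> forall U, nbhs y U ->
  exists D, [/\ definable D, sgval q D &
    exists C, [/\ closed C, C `<=` U & forall g, D (sval g) -> C (f g)]].
Proof.
move=> Hy U HU.
have [V HV VU] := reg HU.
have [W HW WV] := reg (nbhs_interior HV).
have disj : closure W `&` ~` V° = set0.
  by apply: funext => z; apply: propext; split => // -[/WV Vz NVz].
have [Y [HY YG Y1 Y2]] := actdef x0 (@closed_closure _ W)
  (open_closedC (@open_interior _ V)) disj.
case: (ct_dich (ctq' q) HY) => qY.
  exists Y; split => //; exists (closure V); split => //.
    exact: closed_closure.
  move=> g Yg; apply: subset_closure; apply: interior_subset.
  by have := Y2 g Yg => /contrapT.
exfalso; have := Hy _ qY W HW => -[z [[g NYg <-] Wz]].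
by apply: NYg; apply: Y1; apply: subset_closure.
Qed.

Lemma isH_uniq q y1 y2 : isH q y1 -> isH q y2 -> y1 = y2.
Proof.
move=> H1 H2; apply/esym/hX => A B HA HB.
have [D [HD qD [C [cC CA DC]]]] := charH H2 HA.
exists y1; split; last exact: nbhs_singleton.
apply: CA; apply: cC; apply: (@closureS _ (imgD D)); last exact: H1.
by move=> _ [g Dg <-]; apply: DC.
Qed.

Definition h (q : SGt) : X := xget x0 (isH q).

Lemma hP q : isH q (h q).
Proof. exact: (xgetPex x0 (isH_ex q)). Qed.

Lemma h_eq q y : isH q y -> h q = y.
Proof. by move=> Hy; exact: (isH_uniq (@hP q) Hy). Qed.

Lemma h_cont : continuous h.
Proof.
move=> q U HU.
have [D [HD qD [C [cC CU DC]]]] := charH (@hP q) HU.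
suff : nbhs q (h @^-1` U) by [].
apply: filterS (stone_nbhs HD qD) => r rD; apply: CU; apply: cC.
apply: (@closureS _ (imgD D)); last exact: hP.
by move=> _ [g Dg <-]; apply: DC.
Qed.

Lemma h_equiv g q : h (act_SG mul g q) = act g (h q).
Proof.
apply: h_eq => E; rewrite (act_SGE m0 HGset HM) shiftE => -[HE qE] B HB.
have HB' : nbhs (h q) (act g @^-1` B) by exact: actc HB.
have [z [[a [Ha Ea] <-] Bz]] := hP qE HB'.
exists (f (mul g a)); split; last by rewrite /f actM.
exists (mul g a) => //; move: Ea; by rewrite sig_eta.
Qed.

Section tp1.
Variable (H1 : is_SG Gset (tp (sval one))).
Local Notation tp1 := (mkSG H1).

Lemma h_tp1 : h tp1 = x0.
Proof.
apply: h_eq => D [_ D1]; apply: subset_closure; exists one => //.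
by rewrite /f act1.
Qed.

Lemma tp_act (g : Gty Gset) (H2 : is_SG Gset (tp (sval g))) : act_SG mul g tp1 = mkSG H2.
Proof.
have H3 : is_SG Gset (tp (sval (mul g (exist _ (sval one) (svalP one))))).
  by rewrite sig_eta mul1.
rewrite (act_tp m0 HGset HM (Ha := svalP one) H1 H3).
by apply: SG_eq => /=; rewrite sig_eta mul1.
Qed.

Lemma h_f g : h (act_SG mul g tp1) = f g.
Proof. by rewrite h_equiv h_tp1. Qed.

Lemma h_surj x : exists p, h p = x.
Proof.
have cI : compact [set h p | p in [set: SGt]].
  apply: continuous_compact; first exact: continuous_subspaceT h_cont.
  exact: (SG_compact m0 HGset).
have clI := compact_closed hX cI.
suff : [set h p | p in [set: SGt]] x by move=> [p _ <-]; exists p.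
apply: clI; have : closure (range f) x by rewrite dense.
apply: closureS => _ [g _ <-]; exists (act_SG mul g tp1) => //.
exact: h_f.
Qed.

Lemma h_unique (h' : SGt -> X) : continuous h' ->
  (forall g p, h' (act_SG mul g p) = act g (h' p)) -> h' tp1 = x0 -> h' = h.
Proof.
move=> ch' eh' h'1; apply: funext => p; apply/esym/h_eq => D pD B HB.
have HB' : nbhs p (h' @^-1` B) by exact: ch' HB.
have [E [HE pE EB]] := nbhs_stone m0 HB'.
have [g [Eg Dg]] := q_ne (ct_I (ctq' p) pE pD).
have Hg : is_SG Gset (tp (sval g)) := tp_SG m0 HGset (svalP g).
exists (f g); split; first by exists g.
have : h' (mkSG Hg) = f g by rewrite -(tp_act Hg) eh' h'1.
move=> <-; apply: EB; rewrite /stone_basic /=; split => //.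
Qed.

End tp1.
End Univ.

Section PF.
Variables (L : signature) (M : structure L).

Lemma DP_param_form (Q : (nat -> M) -> Prop) m : DP Q ->
  (forall e e', (forall i, i < m -> e i = e' i) -> Q e = Q e') ->
  exists (phi' : formula L) (N : nat) (c : nat -> M),
    fbound phi' <= m + N /\
    forall e tail, Q e = sat (catn m e (catn N c tail)) phi'.
Proof.
move=> [psi [c HQ]] Hloc.
pose B := fbound psi.
pose s i := if i < B then (if odd i then m + i./2 else i./2) else 0.
exists (frename s psi), B.+1, c; split.
  apply: fbound_ren => i; rewrite /s; case: ifP => Hi; last by lia.
  case: ifP => _.
    have : i./2 <= i by rewrite -{2}(odd_double_half i); lia.
    lia.
  have : i./2 <= i by rewrite -{2}(odd_double_half i); lia.
  lia.
move=> e tail.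
rewrite (Hloc e (catn m e (catn B.+1 c tail))); last first.
  by move=> i Hi; rewrite /catn Hi.
rewrite HQ sat_ren; apply: sat_loc => i Hi /=.
rewrite /s -/B Hi; case: (parity i) => [[j Ej]|[j Ej]]; subst i.
  by rewrite odd2 half2 merge2.
rewrite odd21 half21 merge21 /catn.
have -> : (m + j < m) = false by lia.
have -> : (m + j - m < B.+1) = true by lia.
by have -> : m + j - m = j by lia.
Qed.

End PF.

Section Sep.
Variables (L : signature) (M : structure L) (m0 : M) (k : nat)
  (Gset : set ('I_k -> M)).
Hypothesis HGset : definable Gset.

Local Notation SGt := (SG Gset).
Local Notation stone := (@stone_basic L M k Gset).

Lemma stoneU D E : definable D -> definable E ->
  stone (D `|` E) = stone D `|` stone E.
Proof.
move=> HD HE; have HU : definable (D `|` E) by exact: def_setU.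
rewrite eqEsubset; split => q H.
  have H' : sgval q (D `|` E) by [].
  suff : sgval q D \/ sgval q E by [].
  case: (ct_dich (ctq q) HD) => qD; [by left|right].
  apply: (ct_up (ctq q) (ct_I (ctq q) qD H')) => //.
  by move=> x [nD [//|]].
have H' : sgval q D \/ sgval q E by [].
suff : sgval q (D `|` E) by [].
by case: H' => H'; apply: (ct_up (ctq q) H') => // x Hx; first [by left|by right].
Qed.

Lemma SG_cpt (C : set SGt) : closed C -> compact C.
Proof.
move=> cC; apply: (subclosed_compact cC (SG_compact m0 HGset)).
by [].
Qed.

Lemma sep_point (q1 : SGt) (C2 : set SGt) : closed C2 -> ~ C2 q1 ->
  exists D, [/\ definable D, sgval q1 D & stone D `&` C2 = set0].
Proof.
move=> cC2 nC2; apply: contrapT => N.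
have H : forall D, sgval q1 D -> stone D `&` C2 !=set0.
  move=> D qD; apply: contrapT => N'; apply: N; exists D; split => //.
    exact: (ct_def (ctq q1) qD).
  apply: funext => r; apply: propext; split => // Hr; apply: N'; by exists r.
pose F := filter_from (sgval q1) (fun D => stone D `&` C2).
have FF : Filter F.
  apply: filter_from_filter; first by exists setT; exact: (ct_T (ctq q1)).
  move=> D E qD qE; exists (D `&` E); first exact: (ct_I (ctq q1) qD qE).
  rewrite stoneI; [|exact: (ct_def (ctq q1) qD)|exact: (ct_def (ctq q1) qE)].
  by move=> r [[rD rE] rC]; split; split.
have PF : ProperFilter F by apply: filter_from_proper => D qD; apply: H.
have FC : F C2 by exists setT; [exact: (ct_T (ctq q1))|move=> r []].
have [r [C2r clr]] := SG_cpt cC2 PF FC.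
suff E : q1 = r by apply: nC2; rewrite E.
apply: (SG_hausdorff m0) => A B HA HB.
have [E [HE qE EA]] := nbhs_stone m0 HA.
have FE : F (stone E `&` C2) by exists E.
have [s [[sE _] sB]] := clr _ _ FE HB.
by exists s; split => //; apply: EA.
Qed.

Lemma sep_sets (C1 C2 : set SGt) : closed C1 -> closed C2 -> C1 `&` C2 = set0 ->
  exists D, [/\ definable D, C1 `<=` stone D & stone D `&` C2 = set0].
Proof.
move=> cC1 cC2 disj; apply: contrapT => N.
pose I := fun D => definable D /\ stone D `&` C2 = set0.
have H : forall D, I D -> (C1 `&` ~` stone D) !=set0.
  move=> D [HD HD2]; apply: contrapT => N'; apply: N; exists D; split => //.
  move=> r C1r; apply: contrapT => Nr; apply: N'; by exists r.
pose F := filter_from I (fun D => C1 `&` ~` stone D).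
have FF : Filter F.
  apply: filter_from_filter.
    exists set0; split; first exact: def_set0.
    by rewrite stone0 set0I.
  move=> D E [HD D2] [HE E2]; exists (D `|` E).
    split; first exact: def_setU.
    by rewrite stoneU // setIUl D2 E2 setU0.
  by rewrite stoneU // => r [C1r nr]; split; split => // H'; apply: nr; [left|right].
have PF : ProperFilter F by apply: filter_from_proper => D ID; apply: H.
have FC : F C1.
  exists set0; first by split; [exact: def_set0|rewrite stone0 set0I].
  by move=> r [].
have [r [C1r clr]] := SG_cpt cC1 PF FC.
have nC2r : ~ C2 r.
  by move=> C2r; have : (C1 `&` C2) r by []; rewrite disj.
have [D [HD rD D2]] := sep_point cC2 nC2r.
have FD : F (C1 `&` ~` stone D) by exists D.
have [s [[_ ns] sD]] := clr _ _ FD (stone_nbhs HD rD).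
exact: ns sD.
Qed.

End Sep.



Section Orb.
Variables (L : signature) (M : structure L) (m0 : M) (k : nat)
  (Gset : set ('I_k -> M)).
Variables (mul : Gty Gset -> Gty Gset -> Gty Gset) (one : Gty Gset).
Hypothesis HGset : definable Gset.
Variables (phiM : formula L) (cM : nat -> M).
Hypothesis HM : forall a b d : Gty Gset, mul a b = d <->
  sat (cat_env (sval a) (cat_env (sval b) (cat_env (sval d) cM))) phiM.
Hypothesis Hdt : forall p : SG Gset, definable_type (sgval p).

Local Notation ev := (ev m0).
Local Notation Rm := (Rm k phiM cM).

Lemma Rm_loc e1 e2 : (forall i, i < k + (k + k) -> e1 i = e2 i) -> Rm e1 = Rm e2.
Proof.
move=> H; rewrite /Rm; congr sat; apply: funext => i; rewrite /catn.
by case: ifP => // Hi; apply: H.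
Qed.

Lemma Yset_def (p : SG Gset) D : definable D ->
  definable (fun a => exists Ha : Gset a, sgval p (transl mul (exist _ a Ha) D)).
Proof.
move=> HD.
pose s i := if i < k then Some (i + (k + k)) else if i < k + k then Some i
  else if i < k + (k + k) then Some (i - (k + k)) else None.
pose Q' e' := Gset (tupl k e') /\ D (tupl k e') /\
  Rm (fun i => if s i is Some j then e' j else m0).
pose Q e := Gset (tupl k e) /\ exists z, Q' (catn k z e).
have DQ : DP Q.
  apply: DP_and; first exact: definable_DP.
  apply: (DP_exn m0); apply: DP_and; first exact: definable_DP.
  apply: DP_and; first exact: definable_DP.
  exact: DP_sub (DP_catn _ _ _).
have Qloc : forall e e', (forall i, i < k + k -> e i = e' i) -> Q e = Q e'.
  move=> e e' H.
  have E1 : tupl k e = tupl k e'.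
    by apply: funext => o; rewrite /tupl H //; have := ltn_ord o; lia.
  have E2 : forall z, Q' (catn k z e) = Q' (catn k z e').
    move=> z; rewrite /Q' !tupl_catn; congr (_ /\ (_ /\ _)).
    apply: Rm_loc => i Hi; rewrite /s.
    case: ifP => H1; first by rewrite /catn; senv; apply: H; lia.
    case: ifP => H2; first by rewrite /catn; senv; apply: H; lia.
    case: ifP => H3; last by lia.
    by rewrite /catn; senv; apply: H; lia.
  rewrite /Q E1; congr (_ /\ _); apply: propext; split=> -[z Hz]; exists z;
  by move: Hz; rewrite E2.
have [phi' [N [c [Hb HQ]]]] := DP_param_form DQ Qloc.
pose tail := fun _ : nat => m0.
have Hb' : fbound phi' <= k + (k + N) by rewrite addnA.
have Hdt' := Hdt p; rewrite /definable_type in Hdt'.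
have HZ := Hdt' (k + N) phi' tail Hb'.
pose bv (a : 'I_k -> M) := tupl (k + N) (catn k (ev a) c).
have claim : forall a (Ha : Gset a), transl mul (exist _ a Ha) D =
    (fun x => sat (cat_env x (cat_env (bv a) tail)) phi').
  move=> a Ha; apply: funext => x.
  have -> : cat_env x (cat_env (bv a) tail) =
      catn (k + k) (catn k (ev x) (ev a)) (catn N c tail).
    rewrite (cat_env_ev m0) /bv cat_env_tupl; apply: funext => i; senv.
  rewrite -HQ /Q /Q' tupl_catn tupl_ev; apply: propext; split.
    move=> [Gx Dx]; split => //.
    exists (ev (sval (mul (exist _ a Ha) (exist _ x Gx)))).
    rewrite tupl_catn tupl_ev; split; first exact: svalP.
    split => //.
    apply: (mul_to_Rm (m0 := m0) HM (a := exist _ a Ha) (b := exist _ x Gx)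
                      (d := mul (exist _ a Ha) (exist _ x Gx))) => // i Hi /=.
    rewrite /s; senv.
  move=> [Gx [z [Gz [Dz Rz]]]]; exists Gx; rewrite tupl_catn in Gz Dz.
  have : mul (exist _ a Ha) (exist _ x Gx) = exist _ (tupl k z) Gz.
    apply: (Rm_to_mul (m0 := m0) HM Rz) => i Hi /=; rewrite (ev_tupl m0) /s; senv.
  by move=> ->.
have DZ : DP (fun e => Gset (tupl k e) /\
    (fun b => sgval p (fun x => sat (cat_env x (cat_env b tail)) phi'))
      (tupl (k + N) (fun i => if (if i < k then Some i else None) is Some j then e j
                              else catn k (fun _ => m0) c i))).
  apply: DP_and; first exact: definable_DP.
  exact: DP_sub (definable_DP HZ).
have := DP_definable k (fun _ => m0) DZ; congr definable.
apply: funext => a /=; rewrite tupl_cat_env; apply: propext; split.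
  move=> [Ga Hp]; exists Ga; rewrite claim.
  suff -> : bv a = tupl (k + N) (fun i => if (if i < k then Some i else None) is Some j
      then cat_env a (fun _ => m0) j else catn k (fun _ => m0) c i) by [].
  by apply: funext => o; rewrite /bv /tupl /catn; case: ifP.
move=> [Ga Hp]; split => //; move: Hp; rewrite claim.
suff -> : bv a = tupl (k + N) (fun i => if (if i < k then Some i else None) is Some j
      then cat_env a (fun _ => m0) j else catn k (fun _ => m0) c i) by [].
by apply: funext => o; rewrite /bv /tupl /catn; case: ifP.
Qed.

End Orb.

Section Amb.
Variables (L : signature) (M : structure L) (m0 : M) (k : nat)
  (Gset : set ('I_k -> M)).
Variables (mul : Gty Gset -> Gty Gset -> Gty Gset) (one : Gty Gset).
Hypothesis HGset : definable Gset.
Variables (phiM : formula L) (cM : nat -> M).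
Hypothesis HM : forall a b d : Gty Gset, mul a b = d <->
  sat (cat_env (sval a) (cat_env (sval b) (cat_env (sval d) cM))) phiM.
Hypothesis Hassoc : associative mul.
Hypothesis Hlid : left_id one mul.
Hypothesis Hinv : forall g, exists h, mul h g = one.
Hypothesis Hdt : forall p : SG Gset, definable_type (sgval p).

Lemma act_cont g : continuous (act_SG mul g).
Proof.
apply: (stone_continuous m0) => D HD.
exists (transl mul g D); split; first exact: (transl_def m0 HGset HM).
apply: funext => q; apply: propext; rewrite /stone_basic /preimage /=.
rewrite (act_SGE m0 HGset HM) shiftE; split; first by case.
by move=> H; split.
Qed.

Lemma SG_ambit (H1 : is_SG Gset (tp (sval one))) :
  definable_ambit mul one (act_SG mul) (mkSG H1).
Proof.
split; last first.
  rewrite eqEsubset; split => // q _ B HB.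
  have [E [HE qE EB]] := nbhs_stone m0 HB.
  have [Hq qG] := sgvalP q.
  have [a [Ga Ea]] := ct_ne Hq (ct_I Hq qG qE).
  pose g : Gty Gset := exist _ a Ga.
  have Hg : is_SG Gset (tp (sval g)) := tp_SG m0 HGset Ga.
  exists (mkSG Hg); split; first by exists g => //; rewrite (tp_act m0 HGset HM Hassoc Hlid Hinv H1 Hg).
  by apply: EB; split.
split.
  split; [exact: (SG_hausdorff m0)|exact: (SG_compact m0 HGset)|].
  exact: (act_one m0 HGset HM Hlid).
split.
- exact: (act_mul m0 HGset HM Hassoc).
- move=> g; split; first exact: act_cont.
  have [g' Hg'] := Hinv g.
  exists (act_SG mul g'); split; first exact: act_cont.
    by move=> q; rewrite -(act_mul m0 HGset HM Hassoc) Hg' (act_one m0 HGset HM Hlid).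
  move=> q; rewrite -(act_mul m0 HGset HM Hassoc) (mulV Hassoc Hlid Hinv Hg').
  exact: (act_one m0 HGset HM Hlid).
- move=> x C1 C2 cC1 cC2 disj.
  have [D [HD C1D DC2]] := sep_sets m0 HGset cC1 cC2 disj.
  exists (fun a => exists Ha : Gset a, sgval x (transl mul (exist _ a Ha) D)).
  split.
  + exact: (Yset_def m0 HGset HM Hdt x HD).
  + by move=> a [].
  + move=> g /C1D; rewrite /stone_basic (act_SGE m0 HGset HM) shiftE => -[_ H].
    by exists (svalP g); rewrite sig_eta.
  + move=> g [Ha H] C2g; rewrite sig_eta in H.
    have : (stone_basic D `&` C2) (act_SG mul g x).
      split => //; rewrite /stone_basic (act_SGE m0 HGset HM) shiftE; by split.
    by rewrite DC2.
Qed.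

End Amb.
Unset Implicit Arguments. Set Strict Implicit. Set Printing Implicit Defensive.

Theorem proposition3p8 (L : signature) (M : structure L) (k : nat)
    (Gset : set ('I_k -> M)) (mul : Gty Gset -> Gty Gset -> Gty Gset)
    (one : Gty Gset) :
  is_definable_group mul one ->
  (forall p : SG Gset, definable_type (sgval p)) ->
  exists H : is_SG Gset (tp (sval one)),
    let tp1 : SG Gset := mkSG H in
    definable_ambit mul one (act_SG mul) tp1 /\
    forall (X : topologicalType) (act : Gty Gset -> X -> X) (x0 : X),
      definable_ambit mul one act x0 ->
      exists h : SG Gset -> X,
        [/\ continuous h,
            (forall g p, h (act_SG mul g p) = act g (h p)),
            h tp1 = x0,
            (forall x : X, exists p, h p = x) &
            (forall h' : SG Gset -> X,
               continuous h' ->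
               (forall g p, h' (act_SG mul g p) = act g (h' p)) ->
               h' tp1 = x0 -> h' = h)].
Proof.
move=> [HGset [phiM [cM HM]] Hassoc Hlid Hinv] Hdt.
have [_ [c0 _]] := HGset; pose m0 := c0 0.
exists (tp_SG m0 HGset (svalP one)) => tp1; split.
  exact: (SG_ambit m0 HGset HM Hassoc Hlid Hinv Hdt).
move=> X act x0 Hamb; exists (h act x0); split.
- exact: (h_cont Hamb).
- exact: (h_equiv m0 HGset HM Hamb).
- exact: (h_tp1 Hamb).
- exact: (h_surj m0 HGset HM Hamb (tp_SG m0 HGset (svalP one))).
- move=> h' ch' eh' h'1.
  exact: (h_unique m0 HGset HM Hassoc Hlid Hinv Hamb ch' eh' h'1).
Qed.
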